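(* If all valuation functions are symmetric submodular (and the item cost functions are arbitrary non-decreasing functions $c_j:2^N\to\mathbb{R}_{\ge 0}$), then the mechanism IACSM is weakly group-strategyproof: for every coalition $Q\subseteq N$, every true symmetric submodular valuations $v_Q$ of $Q$, every symmetric submodular reports $v_{-Q}$ of the other players and every symmetric submodular misreport $b_Q$, there exists $i\in Q$ with $u_i(b_Q,v_{-Q})\le u_i(v_Q,v_{-Q})$.
   Context: Players $N=\{1,\dots,n\}$, items $M=\{1,\dots,m\}$. Valuations $v_i:2^M\to\mathbb{R}_{\ge0}$ are non-decreasing; symmetric means $f(S)=f(T)$ whenever $|S|=|T|$, submodular means $f(S\cup\{x\})-f(S)\ge f(T\cup\{x\})-f(T)$ for $S\subseteq T$, $x\notin T$. Given the declared profile, the mechanism outputs bundles $A_i$ and payments $p_i$; $u_i(\cdot)=v_i(A_i)-p_i$ measured with player $i$'s true valuation $v_i$. Mechanism IACSM (input: declared valuations $b$): maintain active set $X=N$, sets $T_j=N$ and cost shares $\chi_j=c_j(N)/n$ for all items $j$. While $X\neq\emptyset$: (1) every $i\in X$ computes $A_i\in\arg\max_{S\subseteq M}\{b_i(S)-\sum_{j\in S}\chi_j\}$, choosing among maximizers one of maximum cardinality $k$, and among those the $k$ items with smallest current $\chi_j$ (item ties by index); (2) choose $i^*\in X$ with $|A_{i^*}|$ minimum (ties by smallest index); (3) assign $A_{i^*}$ to $i^*$ permanently and remove $i^*$ from $X$; (4) for every item $j\notin A_{i^*}$ set $T_j:=T_j\setminus\{i^*\}$ and, if $T_j\ne\emptyset$,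 set $\chi_j:=\max\{\chi_j,c_j(T_j)/|T_j|\}$. Output the assigned bundles and payments $p_i=\sum_{j\in A_i}\chi_j$ with final cost shares. *)

(* Defs.v *)
From HB Require Import structures.
From mathcomp Require Import all_boot all_order all_algebra.
Set Implicit Arguments. Unset Strict Implicit. Unset Printing Implicit Defensive.
Import Order.TTheory GRing.Theory Num.Theory.
Local Open Scope ring_scope.

Section IACSM.
Variables (R : realFieldType) (n m : nat).

Definition set_nondecr (T : finType) (f : {set T} -> R) :=
  forall S U : {set T}, S \subset U -> f S <= f U.
Definition set_nonneg (T : finType) (f : {set T} -> R) := forall S, 0 <= f S.
Definition set_symmetric (T : finType) (f : {set T} -> R) :=
  forall S U : {set T}, #|S| = #|U| -> f S = f U.
Definition set_submodular (T : finType) (f : {set T} -> R) :=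
  forall (S U : {set T}) (x : T), S \subset U -> x \notin U ->
    f (x |: U) - f U <= f (x |: S) - f S.

Definition valuation (f : {set 'I_m} -> R) := set_nondecr f /\ set_nonneg f.
Definition sym_submod_val (f : {set 'I_m} -> R) :=
  [/\ set_nondecr f, set_nonneg f, set_symmetric f & set_submodular f].

Record state := State {
  sX : {set 'I_n};                  (* active players *)
  sT : 'I_m -> {set 'I_n};
  schi : 'I_m -> R;                 (* cost shares chi_j *)
  sA : 'I_n -> {set 'I_m}           (* assigned bundles *)
}.

Variable c : 'I_m -> {set 'I_n} -> R.

Definition item_le (chi : 'I_m -> R) (a b : 'I_m) : bool :=
  (chi a < chi b) || ((chi a == chi b) && (a <= b)%N).

Definition net_util (bi : {set 'I_m} -> R) (chi : 'I_m -> R) (S : {set 'I_m}) :=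
  bi S - \sum_(j in S) chi j.

Definition is_maximizer (bi : {set 'I_m} -> R) (chi : 'I_m -> R) (S : {set 'I_m}) :=
  [forall U : {set 'I_m}, net_util bi chi U <= net_util bi chi S].

Definition demand_size (bi : {set 'I_m} -> R) (chi : 'I_m -> R) : nat :=
  (\max_(S : {set 'I_m} | is_maximizer bi chi S) #|S|)%N.

Definition demand (bi : {set 'I_m} -> R) (chi : 'I_m -> R) : {set 'I_m} :=
  [set j in take (demand_size bi chi) (sort (item_le chi) (enum 'I_m))].

Definition select (b : 'I_n -> {set 'I_m} -> R) (st : state) : option 'I_n :=
  ohead [seq i <- enum 'I_n |
          (i \in sX st) &&
          [forall i' in sX st, (#|demand (b i) (schi st)| <= #|demand (b i') (schi st)|)%N]].

Definition step (b : 'I_n -> {set 'I_m} -> R) (st : state) : state :=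
  match select b st with
  | None => st
  | Some i =>
    let Ai := demand (b i) (schi st) in
    let T' := fun j => if j \in Ai then sT st j else sT st j :\ i in
    let chi' := fun j =>
      if (j \notin Ai) && (T' j != set0)
      then Num.max (schi st j) (c j (T' j) / #|T' j|%:R)
      else schi st j in
    State (sX st :\ i) T' chi' (fun k => if k == i then Ai else sA st k)
  end.

Definition init_state : state :=
  State [set: 'I_n] (fun _ => [set: 'I_n])
        (fun j => c j [set: 'I_n] / n%:R) (fun _ => set0).

(* n rounds suffice: each round with X nonempty removes one player *)
Definition final_state (b : 'I_n -> {set 'I_m} -> R) : state :=
  iter n (step b) init_state.

Definition alloc (b : 'I_n -> {set 'I_m} -> R) (i : 'I_n) : {set 'I_m} :=
  sA (final_state b) i.

Definition payment (b : 'I_n -> {set 'I_m} -> R) (i : 'I_n) : R :=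
  \sum_(j in alloc b i) schi (final_state b) j.

Definition utility (vi : {set 'I_m} -> R) (b : 'I_n -> {set 'I_m} -> R) (i : 'I_n) : R :=
  vi (alloc b i) - payment b i.

End IACSM.

(* Main.v *)
Require Import Defs.
From HB Require Import structures.
From mathcomp Require Import all_boot all_order all_algebra ring lra.
From Stdlib Require Import Classical.
Set Implicit Arguments. Unset Strict Implicit. Unset Printing Implicit Defensive.
Import Order.TTheory GRing.Theory Num.Theory.
Local Open Scope ring_scope.

Lemma index_count_sorted (T : eqType) (le : rel T) (s : seq T) x :
  transitive le -> (forall a b, le a b -> le b a -> a = b) ->
  sorted le s -> uniq s -> x \in s ->
  index x s = count (fun y => le y x && (y != x)) s.
Proof.
move=> tr anti; elim: s => [//|a s IH] /= srt /andP[ans us] xin.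
have alls : all (le a) s by exact: order_path_min tr srt.
have srt' : sorted le s by move: srt; case: (s) => //= ?? /andP[].
case: (eqVneq a x) => [<-|nax].
  rewrite /= andbF add0n; apply/esym/eqP; rewrite -leqn0 leqNgt -has_count.
  apply/hasP => -[y ys /andP[lya nya]].
  have := anti _ _ lya (allP alls y ys) => eya; by rewrite eya eqxx in nya.
have xs : x \in s by move: xin; rewrite inE eq_sym (negbTE nax).
rewrite (allP alls x xs) /= add1n IH //.
Qed.

Section Rank.
Variables (R : realFieldType) (m : nat).
Implicit Types (chi : 'I_m -> R).

Lemma item_le_trans chi : transitive (item_le chi).
Proof.
move=> b a c; rewrite /item_le.
case/orP=> [lab|/andP[/eqP eab lab]]; case/orP=> [lbc|/andP[/eqP ebc lbc]].
- by rewrite (lt_trans lab lbc).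
- by rewrite -ebc lab.
- by rewrite eab lbc.
- by rewrite eab ebc eqxx (leq_trans lab lbc) orbT.
Qed.

Lemma item_le_anti chi a b : item_le chi a b -> item_le chi b a -> a = b.
Proof.
rewrite /item_le.
case/orP=> [lab|/andP[/eqP eab lab]]; case/orP=> [lba|/andP[/eqP eba lba]].
- by have := lt_trans lab lba; rewrite ltxx.
- by rewrite eba ltxx in lab.
- by rewrite eab ltxx in lba.
- by apply: val_inj; apply/eqP; rewrite eqn_leq lab lba.
Qed.

Lemma item_le_total chi : total (item_le chi).
Proof.
move=> a b; rewrite /item_le.
case: (ltgtP (chi a) (chi b)) => //= e; exact: leq_total.
Qed.

Lemma item_le_refl chi : reflexive (item_le chi).
Proof. by move=> a; rewrite /item_le eqxx leqnn orbT. Qed.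

Definition ilt chi (x y : 'I_m) := item_le chi x y && (x != y).
Definition rank chi x := count (fun y => ilt chi y x) (enum 'I_m).
Definition low chi k := [set x | (rank chi x < k)%N].
Definition srt chi := sort (item_le chi) (enum 'I_m).

Lemma index_srt chi x : index x (srt chi) = rank chi x.
Proof.
rewrite /rank (index_count_sorted (@item_le_trans chi) (fun a b => @item_le_anti chi a b)).
- by apply/permP; rewrite perm_sort.
- exact: sort_sorted (@item_le_total chi) _.
- by rewrite sort_uniq enum_uniq.
- by rewrite mem_sort mem_enum.
Qed.

Lemma low_take chi k : low chi k = [set x in take k (srt chi)].
Proof.
apply/setP=> x; rewrite !inE in_take ?index_srt //.
by rewrite mem_sort mem_enum.
Qed.

Lemma demand_low (bi : {set 'I_m} -> R) chi :
  demand bi chi = low chi (demand_size bi chi).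
Proof. by rewrite low_take. Qed.

Lemma card_low chi k : (k <= m)%N -> #|low chi k| = k.
Proof.
move=> km; rewrite low_take cardsE.
have /card_uniqP -> : uniq (take k (srt chi)).
  by rewrite take_uniq // sort_uniq enum_uniq.
by rewrite size_takel // size_sort size_enum_ord.
Qed.

Lemma low_mono chi k k' : (k <= k')%N -> low chi k \subset low chi k'.
Proof. by move=> kk; apply/subsetP=> x; rewrite !inE => /leq_trans; apply. Qed.

Lemma rank_lt_le chi a b : (rank chi a < rank chi b)%N -> chi a <= chi b.
Proof.
rewrite -!index_srt => lt.
have := sorted_ltn_index (@item_le_trans chi) (sort_sorted (@item_le_total chi) (enum 'I_m)).
move=> /(_ a b); rewrite !mem_sort !mem_enum => /(_ isT isT lt).
rewrite /item_le; case/orP=> [/ltW //|/andP[/eqP -> _]]; exact: lexx.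
Qed.

Lemma rank_mono chi1 chi2 x :
  (forall j, chi1 j <= chi2 j) -> chi2 x = chi1 x -> (rank chi2 x <= rank chi1 x)%N.
Proof.
move=> le12 ex; apply: sub_count => y /=; rewrite /ilt /item_le ex.
case/andP=> /orP[lt|/andP[/eqP e ley]] ->; rewrite andbT.
  by rewrite (le_lt_trans (le12 y) lt).
have : chi1 y <= chi1 x by rewrite -e le12.
rewrite le_eqVlt => /orP[/eqP ->|->] //.
by rewrite eqxx ley orbT.
Qed.

Lemma low_sub chi1 chi2 k :
  (forall j, chi1 j <= chi2 j) -> {in low chi1 k, forall j, chi2 j = chi1 j} ->
  low chi1 k \subset low chi2 k.
Proof.
move=> le12 eq12; apply/subsetP=> x xl; have := xl; rewrite !inE => lt.
exact: leq_ltn_trans (rank_mono le12 (eq12 x xl)) lt.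
Qed.

Lemma cheapest chi k (S : {set 'I_m}) : #|S| = k ->
  \sum_(j in low chi k) chi j <= \sum_(j in S) chi j.
Proof.
move=> cS.
have km : (k <= m)%N by rewrite -cS; apply: leq_trans (max_card _) _; rewrite card_ord.
set L := low chi k.
rewrite (big_setID S) [X in _ <= X](big_setID L) /=.
rewrite setIC; apply: lerD => //.
set A := L :\: S; set B := S :\: L.
have cAB : #|A| = #|B|.
  have h1 := cardsID S L; have h2 := cardsID L S.
  rewrite card_low // in h1; rewrite cS in h2.
  rewrite setIC in h2; by apply/eqP; rewrite /A /B -(eqn_add2l #|L :&: S|) h1 h2.
have leAB : forall a c, a \in A -> c \in B -> chi a <= chi c.
  move=> a c; rewrite !inE => /andP[_ al] /andP[cl _].
  rewrite -leqNgt in cl; apply: rank_lt_le; exact: leq_trans al cl.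
have key : #|B|%:R * \sum_(i in A) chi i <= #|A|%:R * \sum_(i in B) chi i.
  have e1 : #|B|%:R * \sum_(i in A) chi i = \sum_(c in B) \sum_(a in A) chi a.
    by rewrite sumr_const mulr_natl.
  have e2 : #|A|%:R * \sum_(i in B) chi i = \sum_(c in B) \sum_(a in A) chi c.
    by rewrite exchange_big /= sumr_const mulr_natl.
  rewrite e1 e2; apply: ler_sum => c cB; apply: ler_sum => a aA; exact: leAB.
case: (posnP #|A|) => [A0|Apos].
  have B0 : #|B| = 0%N by rewrite -cAB.
  by rewrite (cards0_eq A0) (cards0_eq B0) !big_set0.
by move: key; rewrite cAB ler_pM2l // ltr0n -cAB.
Qed.
End Rank.
Section D.
Variables (R : realFieldType) (m : nat).
Implicit Types (chi : 'I_m -> R) (bi : {set 'I_m} -> R).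

Lemma ex_maximizer bi chi : exists S, is_maximizer bi chi S.
Proof.
have [S _ HS] := @arg_maxP _ _ _ set0 predT (net_util bi chi) isT.
by exists S; apply/forallP => U; exact: HS.
Qed.

Lemma demand_size_le bi chi : (demand_size bi chi <= m)%N.
Proof.
apply/bigmax_leqP => S _; apply: leq_trans (max_card _) _; by rewrite card_ord.
Qed.

Lemma demand_size_attained bi chi :
  exists2 S, is_maximizer bi chi S & #|S| = demand_size bi chi.
Proof.
have [S0 HS0] := ex_maximizer bi chi.
have pos : (0 < #|[pred S | is_maximizer bi chi S]|)%N.
  by apply/card_gt0P; exists S0.
have [S HS e] := eq_bigmax_cond (fun S : {set 'I_m} => #|S|) pos.
by exists S; [exact: HS | exact: esym e].
Qed.

Lemma maximizer_le bi chi S : is_maximizer bi chi S -> (#|S| <= demand_size bi chi)%N.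
Proof. move=> h; exact: (leq_bigmax_cond (F := fun S : {set 'I_m} => #|S|)) h. Qed.

Lemma submod_set bi : set_submodular bi -> forall (E S U : {set 'I_m}),
  S \subset U -> {in E, forall x, x \notin U} ->
  bi (U :|: E) - bi U <= bi (S :|: E) - bi S.
Proof.
move=> sm E; elim: {E}#|E| {-2}E (erefl #|E|) => [|k IH] E cE S U sSU dEU.
  by rewrite (cards0_eq cE) !setU0 !subrr.
have [x xE] : exists x, x \in E.
  by apply/set0Pn; rewrite -card_gt0 cE.
set E' := E :\ x.
have cE' : #|E'| = k by move: cE; rewrite (cardsD1 x E) xE add1n => -[].
have dE'U : {in E', forall y, y \notin U}.
  by move=> y; rewrite inE => /andP[_]; apply: dEU.
have xU : x \notin U :|: E'.
  by rewrite inE negb_or /E' !inE eqxx /= andbT dEU.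
have eX (V : {set 'I_m}) : V :|: E = x |: (V :|: E').
  by rewrite /E' setUCA setD1K.
have sSU' : S :|: E' \subset U :|: E' by apply: setSU.
have xS : x \notin S :|: E'.
  by apply: contra xU; apply/subsetP.
have h1 := IH E' cE' S U sSU dE'U.
have h2 := sm _ _ x sSU' xU.
rewrite !eX.
have -> : bi (x |: (U :|: E')) - bi U =
  (bi (x |: (U :|: E')) - bi (U :|: E')) + (bi (U :|: E') - bi U) by ring.
have -> : bi (x |: (S :|: E')) - bi S =
  (bi (x |: (S :|: E')) - bi (S :|: E')) + (bi (S :|: E') - bi S) by ring.
exact: lerD.
Qed.

Lemma setU_diff (A B : {set 'I_m}) : A \subset B -> A :|: (B :\: A) = B.
Proof.
move=> sAB; apply/setP => x; rewrite !inE.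
by case: (boolP (x \in A)) => xa //=; rewrite (subsetP sAB).
Qed.

Lemma card_demand bi chi : #|demand bi chi| = demand_size bi chi.
Proof. by rewrite demand_low card_low // demand_size_le. Qed.

Lemma net_low bi chi (T : {set 'I_m}) : set_symmetric bi ->
  net_util bi chi T <= net_util bi chi (low chi #|T|).
Proof.
move=> sy; have Tm : (#|T| <= m)%N by apply: leq_trans (max_card _) _; rewrite card_ord.
rewrite /net_util (sy (low chi #|T|) T); last by rewrite card_low.
rewrite lerD2l lerN2; exact: cheapest.
Qed.

Lemma demand_max bi chi : set_symmetric bi ->
  forall U, net_util bi chi U <= net_util bi chi (demand bi chi).
Proof.
move=> sy U; have [S HS cS] := demand_size_attained bi chi.
apply: le_trans (forallP HS U) _.
by rewrite demand_low -cS; apply: net_low.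
Qed.

Lemma low_net_mono bi chi j k : sym_submod_val bi -> (j <= k)%N ->
  (k <= demand_size bi chi)%N ->
  net_util bi chi (low chi j) <= net_util bi chi (low chi k).
Proof.
case=> _ _ sy sm jk kK.
set K := demand_size bi chi; set S1 := low chi K.
set Dj := low chi j; set Dk := low chi k.
have sjk : Dj \subset Dk by apply: low_mono.
have skK : Dk \subset S1 by apply: low_mono.
set E := Dk :\: Dj; set F := S1 :\: E.
have sES1 : E \subset S1.
  by apply: subset_trans skK; apply/subsetP => x; rewrite inE => /andP[].
have maxS1 := demand_max chi sy F; rewrite demand_low -/K -/S1 in maxS1.
have eS1 : S1 = E :|: F by rewrite setU_diff.
have eSum1 : \sum_(x in S1) chi x = \sum_(x in E) chi x + \sum_(x in F) chi x.
  by rewrite (big_setID E) /= (setIidPr sES1).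
have eSumk : \sum_(x in Dk) chi x = \sum_(x in Dj) chi x + \sum_(x in E) chi x.
  by rewrite (big_setID Dj) /= (setIidPr sjk).
have sDjF : Dj \subset F.
  apply/subsetP => x xj; rewrite /F /E !in_setD xj /=.
  by rewrite (subsetP skK) // (subsetP sjk).
have dis : {in E, forall x, x \notin F} by move=> x xe; rewrite /F in_setD xe.
have hsub' := submod_set sm sDjF dis.
rewrite setUC -eS1 setU_diff // in hsub'.
move: maxS1; rewrite /net_util eSum1 eSumk => maxS1.
lra.
Qed.

Lemma demand_size_mono bi chi1 chi2 k : sym_submod_val bi ->
  (forall j, chi1 j <= chi2 j) -> {in low chi1 k, forall j, chi2 j = chi1 j} ->
  (k <= demand_size bi chi1)%N -> (k <= demand_size bi chi2)%N.
Proof.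
move=> hb le12 eq12 kK; have [_ _ sy _] := hb.
have [M HM] := ex_maximizer bi chi2.
case: (leqP k #|M|) => [kM|Mk]; first exact: leq_trans kM (maximizer_le HM).
have km : (k <= m)%N by apply: leq_trans kK (demand_size_le _ _).
rewrite -{1}(card_low chi1 km); apply: maximizer_le; apply/forallP => U.
apply: le_trans (forallP HM U) _.
have h1 : net_util bi chi2 M <= net_util bi chi1 M.
  by rewrite /net_util lerD2l lerN2; apply: ler_sum => x _.
have h2 := net_low chi1 M sy.
have h3 := low_net_mono hb (ltnW Mk) kK.
have h4 : net_util bi chi1 (low chi1 k) = net_util bi chi2 (low chi1 k).
  by rewrite /net_util; congr (_ - _); apply: eq_bigr => x xl; rewrite eq12.
by rewrite -h4; apply: le_trans h3; apply: le_trans h2.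
Qed.


End D.

Lemma ohead_filter (T : eqType) (P : pred T) (s : seq T) x :
  ohead [seq y <- s | P y] = Some x -> (x \in s) && P x.
Proof.
elim: s => [//|a s IH] /=; case: ifP => Pa /=.
  by case=> <-; rewrite inE eqxx Pa.
by move/IH => /andP[xs ->]; rewrite inE xs orbT.
Qed.

Lemma ohead_filter_index (T : eqType) (P : pred T) (s : seq T) x y :
  ohead [seq y <- s | P y] = Some x -> y \in s -> P y -> (index x s <= index y s)%N.
Proof.
elim: s => [//|a s IH] /=; case: ifP => Pa /=.
  by case=> <-; rewrite eqxx.
move=> h; rewrite inE; case: (eqVneq y a) => [-> _ |nya /= ys Py].
  by rewrite Pa.
have [xs Px] := andP (ohead_filter h).
have nxa : x != a by apply: contraTneq Px => ->; rewrite Pa.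
by rewrite eq_sym (negbTE nxa) ltnS IH.
Qed.

Section Run.
Variables (R : realFieldType) (n m : nat) (c : 'I_m -> {set 'I_n} -> R).
Variable B : 'I_n -> {set 'I_m} -> R.

Definition st t := iter t (step c B) (init_state c).

Lemma select_some S i : select B S = Some i ->
  i \in sX S /\ forall i', i' \in sX S ->
     (#|demand (B i) (schi S)| <= #|demand (B i') (schi S)|)%N.
Proof.
move/ohead_filter => /andP[_ /andP[iX /forallP h]]; split=> // i' i'X.
by have := h i'; rewrite i'X.
Qed.

Lemma select_none S : sX S != set0 -> exists i, select B S = Some i.
Proof.
case/set0Pn => i0 i0X.
pose i := [arg min_(i < i0 in sX S) #|demand (B i) (schi S)|].
have [j jX hj] : exists2 j, j \in sX S & forall i', i' \in sX S ->
    (#|demand (B j) (schi S)| <= #|demand (B i') (schi S)|)%N.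
  by case: (arg_minnP (fun i => #|demand (B i) (schi S)|) i0X) => j jX hj; exists j.
rewrite /select.
set s := [seq _ <- _ | _].
have : j \in s.
  rewrite mem_filter mem_enum andbT jX /=; apply/forallP => i'; apply/implyP; exact: hj.
by case: s => // a s' _; exists a.
Qed.

Lemma step_none S : select B S = None -> step c B S = S.
Proof. by rewrite /step => ->. Qed.

Lemma step_X S : sX (step c B S) =
  if select B S is Some i then sX S :\ i else sX S.
Proof. by rewrite /step; case: select. Qed.

Lemma step_A S i : select B S = Some i -> forall k,
  sA (step c B S) k = if k == i then demand (B i) (schi S) else sA S k.
Proof. by rewrite /step => ->. Qed.

Lemma step_chi_le S j : schi S j <= schi (step c B S) j.
Proof.
rewrite /step; case: select => //= i; case: ifP => // _; by rewrite le_max lexx.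
Qed.

Lemma step_chi_eq S i : select B S = Some i ->
  {in demand (B i) (schi S), forall j, schi (step c B S) j = schi S j}.
Proof. by rewrite /step => -> j jA /=; rewrite jA. Qed.

Lemma stS t : st t.+1 = step c B (st t).
Proof. by []. Qed.

Lemma chi_mono t t' j : (t <= t')%N -> schi (st t) j <= schi (st t') j.
Proof.
move/subnK => <-; elim: (t' - t)%N => [|d IH] //=.
apply: le_trans IH _; exact: step_chi_le.
Qed.

Lemma X_sub t t' : (t <= t')%N -> sX (st t') \subset sX (st t).
Proof.
move/subnK => <-; elim: (t' - t)%N => [|d IH]; first by rewrite add0n subxx.
apply: subset_trans _ IH; rewrite addSn stS step_X.
by case: select => // i; apply: subsetDl.
Qed.

Lemma card_X t : (t <= n)%N -> #|sX (st t)| = (n - t)%N.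
Proof.
elim: t => [|t IH] tn.
  by rewrite subn0; change (#|[set: 'I_n]| = n); rewrite cardsT card_ord.
have tn' : (t <= n)%N by apply: ltnW.
have IH' := IH tn'.
have nz : sX (st t) != set0.
  rewrite -card_gt0 IH' subn_gt0; exact: tn.
have [i hi] := select_none nz.
have [iX _] := select_some hi.
rewrite stS step_X hi.
have h := cardsD1 i (sX (st t)); rewrite iX IH' add1n in h.
rewrite subnS h; exact: erefl.
Qed.

Lemma X_n : sX (st n) = set0.
Proof. by apply: cards0_eq; rewrite card_X // subnn. Qed.

Lemma eventually p t : p \in sX (st t) ->
  exists2 t', (t <= t' < n)%N & select B (st t') = Some p.
Proof.
move=> pX; have tn : (t < n)%N.
  rewrite ltnNge; apply/negP => nt.
  by have := subsetP (X_sub nt) p pX; rewrite X_n inE.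
move: pX; move: tn; move Hd : (n - t)%N => d.
elim: d t Hd => [|d IH] t Hd tn pX; first by move/eqP: Hd; rewrite subn_eq0 leqNgt tn.
case e : (select B (st t)) => [i|].
  case: (eqVneq i p) => [ip|nip]; first by exists t; [rewrite leqnn tn | rewrite e ip].
  have pX' : p \in sX (st t.+1) by rewrite stS step_X e !inE eq_sym nip.
  have tn' : (t.+1 < n)%N.
    rewrite ltn_neqAle tn andbT; apply/negP => /eqP et.
    by move: pX'; rewrite et X_n inE.
  have Hd' : (n - t.+1 = d)%N by rewrite subnS Hd.
  have [t' /andP[h1 h2] h3] := IH t.+1 Hd' tn' pX'.
  by exists t' => //; rewrite h2 andbT ltnW.
have nz : sX (st t) != set0 by apply/set0Pn; exists p.
have [i' hi'] := select_none nz.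
by rewrite e in hi'.
Qed.


Hypothesis hB : forall i, sym_submod_val (B i).

Lemma step_inv S k : (forall i, i \in sX S -> (k <= demand_size (B i) (schi S))%N) ->
  {in low (schi S) k, forall j, schi (step c B S) j = schi S j} /\
  (forall i, i \in sX (step c B S) -> (k <= demand_size (B i) (schi (step c B S)))%N).
Proof.
move=> h; case e : (select B S) => [i|]; last by rewrite step_none.
have [iX _] := select_some e.
have eqC : {in low (schi S) k, forall j, schi (step c B S) j = schi S j}.
  move=> j jl; apply: (step_chi_eq e); rewrite demand_low.
  exact: subsetP (low_mono (schi S) (h i iX)) j jl.
split=> // i'; rewrite step_X e inE => /andP[_ i'X].
by apply: demand_size_mono (hB i') _ eqC (h i' i'X) => j; apply: step_chi_le.
Qed.

Lemma invariant t p : select B (st t) = Some p -> forall s, (t <= s)%N ->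
  {in demand (B p) (schi (st t)), forall j, schi (st s) j = schi (st t) j} /\
  (forall i, i \in sX (st s) ->
     (demand_size (B p) (schi (st t)) <= demand_size (B i) (schi (st s)))%N).
Proof.
move=> e s /subnK <-; elim: (s - t)%N => [|d [IH1 IH2]].
  split=> // i iX; have [_ h] := select_some e; by rewrite -!card_demand h.
rewrite addSn stS; have [h1 h2] := step_inv IH2; split=> // j jD.
rewrite h1 ?IH1 //.
have IH1' : {in low (schi (st t)) (demand_size (B p) (schi (st t))),
   forall j, schi (st (d + t)) j = schi (st t) j}.
  by move=> x xl; apply: IH1; rewrite demand_low.
have sub := low_sub (fun j => chi_mono j (leq_addl d t)) IH1'.
rewrite demand_low in jD; exact: subsetP sub j jD.
Qed.

Lemma select_lt t p : select B (st t) = Some p -> (t < n)%N.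
Proof.
move=> e; have [pX _] := select_some e; rewrite ltnNge; apply/negP => nt.
by have := subsetP (X_sub nt) p pX; rewrite X_n inE.
Qed.

Lemma alloc_after t p : select B (st t) = Some p -> forall s, (t < s)%N ->
  p \notin sX (st s) /\ sA (st s) p = demand (B p) (schi (st t)).
Proof.
move=> e s /subnK <-; elim: (s - t.+1)%N => [|d [IH1 IH2]].
  by rewrite add0n stS step_X e (step_A e) eqxx !inE eqxx.
rewrite addSn stS step_X; case e' : (select B _) => [i|]; last by rewrite (step_none e').
have [iX _] := select_some e'.
have nip : i != p by apply: contraNneq IH1 => <-.
have npi : (p == i) = false by rewrite eq_sym (negbTE nip).
split; first by rewrite in_setD1 (negbTE IH1) andbF.
by rewrite (step_A e') npi.
Qed.


Lemma final_of t p : select B (st t) = Some p ->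
  alloc c B p = demand (B p) (schi (st t)) /\
  payment c B p = \sum_(j in demand (B p) (schi (st t))) schi (st t) j.
Proof.
move=> e; have tn := select_lt e.
have [_ hA] := alloc_after e tn.
have [hC _] := invariant e (ltnW tn).
have eA : alloc c B p = demand (B p) (schi (st t)) by exact: hA.
split=> //; rewrite /payment eA; apply: eq_bigr => j jD; exact: hC.
Qed.

End Run.

Lemma step_ext (R : realFieldType) (n m : nat) (c : 'I_m -> {set 'I_n} -> R)
  (B1 B2 : 'I_n -> {set 'I_m} -> R) S p :
  select B1 S = Some p -> select B2 S = Some p -> B1 p = B2 p ->
  step c B1 S = step c B2 S.
Proof. by rewrite /step => -> -> ->. Qed.


Theorem mainTheorem7 (R : realFieldType) (n m : nat)
  (c : 'I_m -> {set 'I_n} -> R)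
  (hc_mono : forall j, set_nondecr (c j))
  (hc_nonneg : forall j, set_nonneg (c j))
  (Q : {set 'I_n}) (hQ : Q != set0)
  (v : 'I_n -> {set 'I_m} -> R)
  (hv : forall i, sym_submod_val (v i))
  (b : 'I_n -> {set 'I_m} -> R)
  (hb : forall i, i \in Q -> sym_submod_val (b i)) :
  exists2 i, i \in Q &
    utility c (v i) (fun k => if k \in Q then b k else v k) i
      <= utility c (v i) v i.
Proof.
set B' := fun k => if k \in Q then b k else v k.
have hB' : forall i, sym_submod_val (B' i).
  by move=> i; rewrite /B'; case: ifP => iQ; [apply: hb | apply: hv].
have B'out : forall i, i \notin Q -> B' i = v i by move=> i /negbTE; rewrite /B' => ->.
suff : forall d t, (t + d = n)%N -> st c v t = st c B' t ->
  exists2 i, i \in Q & utility c (v i) B' i <= utility c (v i) v i.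
  by move/(_ n 0%N); apply.
elim=> [|d IH] t.
  rewrite addn0 => tn est; case/set0Pn: hQ => i iQ; exists i => //.
  have ef : final_state c B' = final_state c v by rewrite /final_state; subst t; exact: (esym est).
  by rewrite /utility /payment /alloc ef.
move=> tdn est.
case: (classic (st c v t.+1 = st c B' t.+1)) => [est'|neq].
  by apply: (IH t.+1); rewrite ?addSnnS.
set S := st c v t.
have tn : (t < n)%N by rewrite -tdn -addSnnS leq_addr.
have nz : sX S != set0 by rewrite -card_gt0 card_X ?subn_gt0 // ltnW.
have [p ep] := select_none v nz.
have [q eq'] := select_none B' nz.
have est0 : st c B' t = S by rewrite /S est.
rewrite -est0 in eq'.
have [pX psz] := select_some ep.
have [qX qsz] := select_some eq'.
rewrite est0 in qX qsz.
have eqS : select B' S = Some q by rewrite -est0.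
case: (boolP (p \in Q)) => pQ.
  exists p => //.
  have [aV pV] := final_of hv ep.
  have pX' : p \in sX (st c B' t) by rewrite est0.
  have [t' /andP[tt' t'n] e'] := eventually pX'.
  have [aB pB] := final_of hB' e'.
  rewrite /utility aV pV aB pB.
  have le : forall j, schi S j <= schi (st c B' t') j.
    by move=> j; rewrite -est0; apply: chi_mono.
  have [_ _ syp _] := hv p.
  have hmax := demand_max (schi S) syp (demand (B' p) (schi (st c B' t'))).
  move: hmax; rewrite /net_util => hmax.
  apply: le_trans hmax; rewrite lerD2l lerN2; apply: ler_sum => j _; exact: le.
have B'p := B'out p pQ.
case: (boolP (q \in Q)) => qQ.
  exists q => //.
  have kk : (demand_size (B' q) (schi S) <= demand_size (v p) (schi S))%N.
    by rewrite -!card_demand -B'p; apply: qsz.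
  have sub : demand (B' q) (schi S) \subset demand (v p) (schi S).
    by rewrite !demand_low; apply: low_mono.
  have [aB pB] := final_of hB' eq'.
  rewrite est0 in aB pB.
  have nqp : q != p by apply: contraNneq pQ => <-.
  have qX1 : q \in sX (st c v t.+1) by rewrite stS step_X ep in_setD1 qX andbT.
  have [tq /andP[ttq tqn] eq2] := eventually qX1.
  have [aV pV] := final_of hv eq2.
  have [inv _] := invariant hv ep (ltnW ttq).
  have [_ _ syq _] := hv q.
  have hmax := demand_max (schi (st c v tq)) syq (demand (B' q) (schi S)).
  rewrite /utility aV pV aB pB.
  apply: le_trans hmax; rewrite /net_util lerD2l lerN2 le_eqVlt; apply/orP; left.
  apply/eqP; apply: eq_bigr => j jD; rewrite inv //; exact: subsetP sub j jD.
exfalso; have B'q := B'out q qQ.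
have e1 : #|demand (v p) (schi S)| = #|demand (v q) (schi S)|.
  apply/eqP; rewrite eqn_leq psz //=.
  by have := qsz p pX; rewrite B'p B'q.
have ep' := ep; have eqS' := eqS; rewrite /select in ep' eqS'.
have i1 : (index p (enum 'I_n) <= index q (enum 'I_n))%N.
  apply: (ohead_filter_index ep'); first by rewrite mem_enum.
  rewrite /= qX /=; apply/forallP => i'; apply/implyP => i'X; rewrite -e1; exact: psz.
have i2 : (index q (enum 'I_n) <= index p (enum 'I_n))%N.
  apply: (ohead_filter_index eqS'); first by rewrite mem_enum.
  rewrite /= pX /=; apply/forallP => i'; apply/implyP => i'X.
  by rewrite B'p e1 -B'q; apply: qsz.
have ei : index p (enum 'I_n) = index q (enum 'I_n) by apply/eqP; rewrite eqn_leq i1 i2.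
have pq : p = q.
  have := erefl (nth p (enum 'I_n) (index p (enum 'I_n))).
  by rewrite {2}ei !nth_index ?mem_enum.
apply: neq; rewrite !stS -/S -est0 est0.
rewrite -pq in eqS.
exact: step_ext ep eqS (esym B'p).
Qed.
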